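(* For every $n \ge 1$, $$ f^+_n(x) = \sum_{w \in \mathcal{D}^B_n \cap B^*_n} x^{\mathrm{exc}_B(w)} \quad\text{and}\quad f^-_n(x) = \sum_{w \in \mathcal{D}^B_n \setminus B^*_n} x^{\mathrm{exc}_B(w)}. $$
   Context: A signed permutation of $[n]$ is a set $S = \{a_1, \dots, a_n\}$ with $a_i \in \{i, -i\}$, together with a bijection $w : S \to S$. $B_n$ is the set of all of them. - $a \in S$ is a $B$-excedance if $w(a) > a$, or if $a < 0$ and $w(a) = a$; $\mathrm{exc}_B(w)$ is their number. - $\mathcal{D}^B_n$ is the set of $w \in B_n$ having no $a \in S$ with $a > 0$ and $w(a) = a$. - $d^B_n(x) = \sum_{w \in \mathcal{D}^B_n} x^{\mathrm{exc}_B(w)}$. - For $w$ on the set $S$, $m_w$ denotes the minimum element of $S$ in the usual order of $\mathbb{Z}$, and $B^*_n = \{w \in B_n : w(m_w) > 0\}$. - $f^+_n, f^-_n$ are the unique real polynomials with $d^B_n = f^+_n + f^-_n$, $f^+_n(x) = x^n f^+_n(1/x)$ and $f^-_n(x) = x^{n+1} f^-_n(1/x)$. *)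

(* Defs.v *)
From HB Require Import structures.
From mathcomp Require Import all_boot all_order all_algebra all_fingroup.
Set Implicit Arguments. Unset Strict Implicit. Unset Printing Implicit Defensive.
Import Order.TTheory GRing.Theory Num.Theory.
Local Open Scope ring_scope.

(* A signed permutation of [n]: a sign choice s (s i = true means a_{i+1} = -(i+1))
   determining S = {a_1,...,a_n}, together with a bijection of S, encoded as
   the permutation p of indices: w(a_{i+1}) = a_{p(i)+1}. *)
Definition signedB (n : nat) := ({ffun 'I_n -> bool} * {perm 'I_n})%type.

Definition lab n (s : {ffun 'I_n -> bool}) (i : 'I_n) : int :=
  if s i then - (i.+1)%:Z else (i.+1)%:Z.

Definition wlab n (w : signedB n) (i : 'I_n) : int := lab w.1 (w.2 i).
Definition alab n (w : signedB n) (i : 'I_n) : int := lab w.1 i.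

Definition excB n (w : signedB n) : nat :=
  #|[set i : 'I_n | (alab w i < wlab w i) ||
                    ((alab w i < 0) && (wlab w i == alab w i))]|.

Definition derangB n (w : signedB n) : bool :=
  [forall i : 'I_n, ~~ ((0 < alab w i) && (wlab w i == alab w i))].

Definition BstarB n (w : signedB n) : bool :=
  [exists i : 'I_n, [forall j : 'I_n, alab w i <= alab w j] && (0 < wlab w i)].

Definition dB (R : realFieldType) n : {poly R} :=
  \sum_(w : signedB n | derangB w) 'X^(excB w).

Definition sym_deg (R : realFieldType) (k : nat) (f : {poly R}) : Prop :=
  forall x : R, x != 0 -> x ^+ k * f.[x^-1] = f.[x].

(* Main.v *)
Require Import Defs.
From HB Require Import structures.
From mathcomp Require Import all_boot all_order all_algebra all_fingroup.
From mathcomp Require Import zify.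
Set Implicit Arguments. Unset Strict Implicit. Unset Printing Implicit Defensive.
Import Order.TTheory GRing.Theory Num.Theory.


Section Sig.
Variables (n m : nat).
Hypothesis hm : m <= n.+1.

Definition Em (s : {perm 'I_n.+1}) :=
  #|[set k : 'I_n.+1 | (k < s k) || ((k < m) && (s k == k))]|.
Definition Dm (s : {perm 'I_n.+1}) :=
  [forall k : 'I_n.+1, ~~ ((m <= k) && (s k == k))].
Definition Sm (s : {perm 'I_n.+1}) := m <= s ord0.

Definition alf (k : 'I_n.+1) : 'I_n.+1 :=
  inord (if k < m then m - k.+1 else n + m - k).
Definition bef (k : 'I_n.+1) : 'I_n.+1 :=
  inord (if k < m then (if (k:nat) == 0 then 0 else m - k) else n + m - k).

Lemma alfE k : (alf k : nat) = if k < m then m - k.+1 else n + m - k.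
Proof. have := ltn_ord k; rewrite /alf inordK //; case: ifP; lia. Qed.
Lemma befE k : (bef k : nat) = if k < m then (if (k:nat) == 0 then 0 else m - k) else n + m - k.
Proof. have := ltn_ord k; rewrite /bef inordK //; case: ifP => ?; [case: ifP|]; lia. Qed.

Lemma ifE (c : bool) (x a b : nat) : x = (if c then a else b) -> (c /\ x = a) \/ (~~ c /\ x = b).
Proof. by case: c => ->; [left|right]. Qed.

Lemma alfK : involutive alf.
Proof.
move=> k; apply: ord_inj; have := ltn_ord k; have := ltn_ord (alf k).
case/ifE: (alfE k) => [[h1 e1]|[h1 e1]]; case/ifE: (alfE (alf k)) => [[h2 e2]|[h2 e2]]; lia.
Qed.

Lemma befC (k : 'I_n.+1) : [\/ [/\ k < m, (k:nat) = 0 & (bef k : nat) = 0],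
   [/\ k < m, (k:nat) != 0 & (bef k : nat) = m - k] |
   [/\ m <= k & (bef k : nat) = n + m - k]].
Proof.
rewrite befE; case: (ltnP k m) => h; last by apply: Or33.
by case: eqP => h2; [apply: Or31 | apply: Or32; rewrite ?h2; split => //; apply/eqP].
Qed.

Lemma befK : involutive bef.
Proof.
move=> k; apply: ord_inj; have := ltn_ord k; have := ltn_ord (bef k).
case: (befC k) => [[h1 h2 e1]|[h1 h2 e1]|[h1 e1]];
case: (befC (bef k)) => [[h3 h4 e2]|[h3 h4 e2]|[h3 e2]]; lia.
Qed.

Lemma alfC (k : 'I_n.+1) : [\/ k < m /\ (alf k : nat) = m - k.+1 |
   m <= k /\ (alf k : nat) = n + m - k].
Proof. by rewrite alfE; case: (ltnP k m) => h; [left|right]. Qed.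

Lemma ordeq (a b : 'I_n.+1) : (a == b) = ((a : nat) == b).
Proof. by []. Qed.

Definition pal := perm (can_inj alfK).
Definition pbe := perm (can_inj befK).
Definition fP (s : {perm 'I_n.+1}) : {perm 'I_n.+1} := (pbe * s * pal)%g.

Lemma fPE s k : fP s k = alf (s (bef k)).
Proof. by rewrite /fP !permM !permE. Qed.

Lemma fPbE s j : fP s (bef j) = alf (s j).
Proof. by rewrite fPE befK. Qed.

Lemma fP_inj : injective fP.
Proof.
move=> s1 s2 h; apply/permP => k.
have := congr1 (fun t : {perm 'I_n.+1} => t (bef k)) h; rewrite /= !fPbE.
exact: (can_inj alfK).
Qed.

Lemma DQ s j : (m <= bef j) && (fP s (bef j) == bef j) = (m <= j) && (s j == j).
Proof.
rewrite fPbE !ordeq; have := ltn_ord j; have := ltn_ord (s j).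
case: (befC j) => [[h1 h2 e1]|[h1 h2 e1]|[h1 e1]];
case: (alfC (s j)) => [[h3 e2]|[h3 e2]]; rewrite e1 e2; lia.
Qed.

Lemma D_fP s : Dm (fP s) = Dm s.
Proof.
apply/forallP/forallP => h j.
  by rewrite -DQ; apply: h.
by rewrite -(befK j) DQ; apply: h.
Qed.

Lemma S_fP s : Sm (fP s) = Sm s.
Proof.
rewrite /Sm fPE; case: (posnP m) => hm0; first by rewrite hm0.
have -> : bef ord0 = ord0 by apply: ord_inj; rewrite befE /= hm0.
have := ltn_ord (s ord0); case: (alfC (s ord0)) => [[h3 e2]|[h3 e2]]; rewrite e2; lia.
Qed.

Lemma cardS (P : pred 'I_n.+1) : #|[set k | P k]| = \sum_k (P k : nat).
Proof.
rewrite -sum1_card big_mkcond /=; apply: eq_bigr => k _.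
by rewrite inE; case: (P k).
Qed.

Lemma sum_first (b : 'I_n.+1 -> bool) : \sum_(j < n.+1) (((j:nat) == 0) && b j : nat) = b ord0.
Proof. by rewrite big_ord_recl /= big1 ?addn0 // => i _. Qed.

Lemma cross (s : {perm 'I_n.+1}) : \sum_(j < n.+1) ((m <= j) && (s j < m) : nat) =
                \sum_(j < n.+1) ((j < m) && (m <= s j) : nat).
Proof.
have e1 : \sum_(j < n.+1) (j < m : nat) = \sum_(j < n.+1) (s j < m : nat).
  by rewrite (reindex_inj (@perm_inj _ s)).
have e2 : \sum_(j < n.+1) (j < m : nat) = \sum_(j < n.+1) ((j < m) && (s j < m) : nat)
     + \sum_(j < n.+1) ((j < m) && (m <= s j) : nat).
  rewrite -big_split; apply: eq_bigr => j _ /=; lia.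
have e3 : \sum_(j < n.+1) (s j < m : nat) = \sum_(j < n.+1) ((j < m) && (s j < m) : nat)
     + \sum_(j < n.+1) ((m <= j) && (s j < m) : nat).
  rewrite -big_split; apply: eq_bigr => j _ /=; lia.
lia.
Qed.

Lemma E_fP (s : {perm 'I_n.+1}) : Dm s -> Em (fP s) = n.+1 + ~~ Sm s - Em s.
Proof.
move=> /forallP hD.
have key : forall j : 'I_n.+1,
  ((j < s j) || ((j < m) && (s j == j)) : nat)
  + ((bef j < fP s (bef j)) || ((bef j < m) && (fP s (bef j) == bef j)) : nat)
  + ((m <= j) && (s j < m) : nat) + (((j:nat) == 0) && ((0 < m) && (m <= s j)) : nat)
  = 1 + ((j < m) && (m <= s j) : nat) + (((j:nat) == 0) && (0 < m) : nat).
  move=> j; have := hD j; rewrite fPbE !ordeq; have := ltn_ord j; have := ltn_ord (s j).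
  case: (befC j) => [[h1 h2 e1]|[h1 h2 e1]|[h1 e1]];
  case: (alfC (s j)) => [[h3 e2]|[h3 e2]]; rewrite e1 e2; lia.
have : \sum_(j < n.+1) (((j < s j) || ((j < m) && (s j == j)) : nat)
  + ((bef j < fP s (bef j)) || ((bef j < m) && (fP s (bef j) == bef j)) : nat)
  + ((m <= j) && (s j < m) : nat) + (((j:nat) == 0) && ((0 < m) && (m <= s j)) : nat))
  = \sum_(j < n.+1) (1 + ((j < m) && (m <= s j) : nat) + (((j:nat) == 0) && (0 < m) : nat)).
  by apply: eq_bigr => j _; exact: key.
have sf2 : \sum_(j < n.+1) (((j:nat) == 0) && ((0 < m) && (m <= s j)) : nat) = (0 < m) && (m <= s ord0).
  exact: (sum_first (fun j => (0 < m) && (m <= s j))).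
have sf1 : \sum_(j < n.+1) (((j:nat) == 0) && (0 < m) : nat) = (0 < m).
  exact: (sum_first (fun j => (0 < m))).
rewrite !big_split /= sf1 sf2 cross.
have eE : \sum_(j < n.+1) ((j < s j) || ((j < m) && (s j == j)) : nat) = Em s.
  by rewrite /Em cardS.
have eF : \sum_(j < n.+1) ((bef j < fP s (bef j)) || ((bef j < m) && (fP s (bef j) == bef j)) : nat)
   = Em (fP s).
  by rewrite /Em cardS [RHS](reindex_inj (can_inj befK)).
rewrite eE eF sum1_card card_ord /Sm.
set c := \sum_(j < n.+1) ((j < m) && (m <= s j) : nat).
move=> H; case: (posnP m) => hm0; case: (leqP m (s ord0)) => h /=; rewrite ?hm0 in H h *; lia.
Qed.

End Sig.


Section Rank.
Variables (n : nat) (s : {ffun 'I_n.+1 -> bool}).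

Local Notation L := (lab s).

Lemma lab_inj : injective L.
Proof.
move=> i j; rewrite /lab => h; apply: ord_inj.
move: h; case: (s i); case: (s j) => /= h; lia.
Qed.

Lemma lab_neg i : (L i < 0)%R = s i.
Proof. rewrite /lab; case: (s i); lia. Qed.

Lemma lab_pos i : (0 < L i)%R = ~~ s i.
Proof. rewrite /lab; case: (s i) => /=; lia. Qed.

Definition lower i := [set j | (L j < L i)%R].

Lemma lower_lt i : #|lower i| < n.+1.
Proof.
have h : lower i \proper [set: 'I_n.+1].
  by apply/properP; split; [exact: subsetT| exists i; rewrite ?inE // ltxx].
by have := proper_card h; rewrite cardsT card_ord.
Qed.

Definition rk i : 'I_n.+1 := Ordinal (lower_lt i).

Lemma rk_lt_of i j : (L i < L j)%R -> rk i < rk j.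
Proof.
move=> h; apply: proper_card; apply/properP; split.
  apply/subsetP => k; rewrite !inE => hk; exact: lt_trans hk h.
by exists i; rewrite !inE ?ltxx.
Qed.

Lemma rk_lt i j : (rk i < rk j) = (L i < L j)%R.
Proof.
apply/idP/idP; last exact: rk_lt_of.
case: (ltrgtP (L i) (L j)) => // h.
  by move=> h2; have := rk_lt_of h; lia.
by move/lab_inj: h => ->; rewrite ltnn.
Qed.

Lemma rk_inj : injective rk.
Proof.
move=> i j h; apply: lab_inj; case: (ltrgtP (L i) (L j)) => // h2.
  by have := rk_lt_of h2; rewrite h ltnn.
by have := rk_lt_of h2; rewrite h ltnn.
Qed.

Definition mneg := #|[set j | s j]|.

Lemma mneg_le : mneg <= n.+1.
Proof. by have := max_card [set j | s j]; rewrite card_ord. Qed.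

Lemma rk_neg i : (rk i < mneg) = s i.
Proof.
rewrite /mneg /=; case hs: (s i).
  apply: proper_card; apply/properP; split.
    apply/subsetP => k; rewrite !inE => hk; rewrite -lab_neg.
    by apply: lt_trans hk _; rewrite lab_neg.
  by exists i; rewrite !inE ?ltxx.
apply/negbTE; rewrite -leqNgt; apply: subset_leq_card; apply/subsetP => k.
rewrite !inE -lab_neg => hk; apply: lt_trans hk _; by rewrite lab_pos hs.
Qed.

Lemma rk_min i : (rk i == 0 :> nat) = [forall j, (L i <= L j)%R].
Proof.
apply/eqP/forallP => [h j | h].
  rewrite leNgt; apply/negP => /rk_lt_of; rewrite h; lia.
apply/eqP; rewrite /= cards_eq0; apply/eqP/setP => j; rewrite !inE.
by rewrite ltNge h.
Qed.

Definition prk := perm rk_inj.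
Definition cnj (p : {perm 'I_n.+1}) : {perm 'I_n.+1} := (prk^-1 * p * prk)%g.

Lemma cnjE p i : cnj p (prk i) = prk (p i).
Proof. by rewrite /cnj !permM permK. Qed.

Lemma cnj_inj : injective cnj.
Proof. by move=> p q; rewrite /cnj => /mulIg /mulgI. Qed.

End Rank.

Section Link.
Variables (n : nat) (s : {ffun 'I_n.+1 -> bool}).
Local Notation m := (mneg s).
Local Notation L := (lab s).

Lemma prkE i : prk s i = rk s i.
Proof. by rewrite permE. Qed.

Lemma exc_link p : excB ((s, p) : signedB n.+1) = Em m (cnj s p).
Proof.
rewrite /excB /Em -[RHS](card_preimset _ (@perm_inj _ (prk s))).
apply: eq_card => i; rewrite !inE /alab /wlab /= cnjE.
rewrite (inj_eq (@perm_inj _ _)) (inj_eq (@lab_inj _ s)) !prkE rk_lt rk_neg lab_neg.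
by [].
Qed.

Lemma Q_link (p : {perm 'I_n.+1}) i : (0 < L i)%R && (L (p i) == L i) =
   (m <= prk s i) && (cnj s p (prk s i) == prk s i).
Proof.
rewrite cnjE (inj_eq (@perm_inj _ _)) (inj_eq (@lab_inj _ s)) prkE leqNgt rk_neg lab_pos.
by [].
Qed.

Lemma der_link p : derangB ((s, p) : signedB n.+1) = Dm m (cnj s p).
Proof.
apply/forallP/forallP => h k.
  by rewrite -(permKV (prk s) k) -Q_link; apply: h.
by rewrite /alab /wlab /= Q_link; apply: h.
Qed.

Lemma bstar_link p : BstarB ((s, p) : signedB n.+1) = Sm m (cnj s p).
Proof.
rewrite /BstarB /Sm /alab /wlab /=.
apply/existsP/idP.
  case=> i /andP[hmin hpos].
  have e : prk s i = ord0 by apply: ord_inj; rewrite prkE; apply/eqP; rewrite rk_min.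
  by rewrite -e cnjE prkE leqNgt rk_neg -lab_pos.
move=> h; exists ((prk s)^-1 ord0)%g.
have e : prk s ((prk s)^-1 ord0)%g = ord0 by rewrite permKV.
apply/andP; split.
  by rewrite -rk_min -prkE e.
by rewrite lab_pos -rk_neg -leqNgt -prkE -cnjE e.
Qed.

Lemma per_s (R : nmodType) (F : nat -> R) b :
  (\sum_(p | derangB ((s, p) : signedB n.+1) && (BstarB ((s, p) : signedB n.+1) == b))
      F (excB ((s, p) : signedB n.+1)))%R
  = (\sum_(t : {perm 'I_n.+1} | Dm m t && (Sm m t == b)) F (Em m t))%R.
Proof.
rewrite [RHS](reindex_inj (@cnj_inj _ s)); apply: eq_big => p.
  by rewrite der_link bstar_link.
by rewrite exc_link.
Qed.

End Link.


Lemma sig_sym (R : nmodType) n m (hm : m <= n.+1) (G : nat -> R) b :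
 (\sum_(t : {perm 'I_n.+1} | Dm m t && (Sm m t == b)) G (Em m t))%R =
 (\sum_(t : {perm 'I_n.+1} | Dm m t && (Sm m t == b)) G (n.+1 + ~~b - Em m t)%N)%R.
Proof.
rewrite (reindex_inj (fP_inj (hm := hm))); apply: eq_big => t.
  by rewrite D_fP S_fP.
by rewrite D_fP S_fP => /andP[hD /eqP hS]; rewrite E_fP // hS.
Qed.

Lemma sym_all (R : nmodType) n (G : nat -> R) b :
 (\sum_(w : signedB n.+1 | derangB w && (BstarB w == b)) G (excB w))%R =
 (\sum_(w : signedB n.+1 | derangB w && (BstarB w == b)) G (n.+1 + ~~b - excB w)%N)%R.
Proof.
have sp : forall F : signedB n.+1 -> R,
  (\sum_(w : signedB n.+1 | derangB w && (BstarB w == b)) F w)%R =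
  (\sum_(s : {ffun 'I_n.+1 -> bool}) \sum_(p : {perm 'I_n.+1} |
      derangB ((s, p) : signedB n.+1) && (BstarB ((s, p) : signedB n.+1) == b)) F (s, p))%R.
  move=> F; rewrite pair_big_dep /=; apply: eq_big => [[s p]|[s p]] //.
rewrite !sp; apply: eq_bigr => s _.
rewrite (per_s s G b) (per_s s (fun e => G (n.+1 + ~~b - e)%N) b).
by rewrite (sig_sym (mneg_le s) G b).
Qed.

Local Open Scope ring_scope.

Lemma poly_zero_of (R : realFieldType) (g : {poly R}) :
  (forall x : R, x != 0 -> x != 1 -> g.[x] = 0) -> g = 0.
Proof.
move=> h; apply/eqP; apply/negPn/negP => hg.
pose rs := [seq (i.+2)%:R : R | i <- iota 0 (size g)].
suff : (size rs < size g)%N by rewrite size_map size_iota ltnn.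
apply: (max_poly_roots hg).
  apply/allP => x /mapP [i _ ->]; apply/rootP; apply: h.
    by rewrite pnatr_eq0.
  by rewrite pnatr_eq1.
rewrite map_inj_uniq ?iota_uniq //; move=> i j /eqP; by rewrite eqr_nat => /eqP [].
Qed.

Lemma excB_le n (w : signedB n) : (excB w <= n)%N.
Proof. by rewrite /excB; apply: leq_trans (max_card _) _; rewrite card_ord. Qed.

Theorem proposition4p1 (R : realFieldType) (n : nat) : (1 <= n)%N ->
  let P : {poly R} := \sum_(w : signedB n | derangB w && BstarB w) 'X^(excB w) in
  let M : {poly R} := \sum_(w : signedB n | derangB w && ~~ BstarB w) 'X^(excB w) in
  (dB R n = P + M /\ sym_deg n P /\ sym_deg n.+1 M) /\
  (forall fp fm : {poly R},
     dB R n = fp + fm -> sym_deg n fp -> sym_deg n.+1 fm -> fp = P /\ fm = M).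
Proof.
case: n => [//|n] _ P M.
pose Q b : {poly R} := \sum_(w : signedB n.+1 | derangB w && (BstarB w == b)) 'X^(excB w).
have evalQ : forall b (x : R), (Q b).[x] = \sum_(w : signedB n.+1 | derangB w && (BstarB w == b)) x ^+ excB w.
  by move=> b x; rewrite /Q horner_sum; apply: eq_bigr => w _; rewrite hornerXn.
have symQ : forall b, sym_deg (n.+1 + ~~ b) (Q b).
  move=> b x hx; rewrite !evalQ mulr_sumr.
  rewrite [RHS](@sym_all _ n (fun e => x ^+ e) b); apply: eq_bigr => w _.
  have hle : (excB w <= n.+1 + ~~ b)%N by apply: leq_trans (leq_addr (~~ b) n.+1); apply: excB_le.
  by rewrite -{1}(subnK hle) exprD exprVn mulfK // expf_neq0.
have eP : P = Q true by apply: eq_bigl => w; rewrite eqb_id.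
have eM : M = Q false by apply: eq_bigl => w; rewrite eqbF_neg.
have symP : sym_deg n.+1 P by rewrite eP; have := symQ true; rewrite addn0.
have symM : sym_deg n.+2 M by rewrite eM; have := symQ false; rewrite addn1.
have dBE : dB R n.+1 = P + M by rewrite /dB (bigID (fun w => BstarB w)) /=.
split; first by [].
move=> fp fm hd sp sm.
have hg : fp - P = M - fm.
  have e : fp + fm = P + M by rewrite -hd dBE.
  by apply/eqP; rewrite subr_eq addrC addrA -e addrK.
suff g0 : fp - P = 0.
  by split; apply/eqP; rewrite -subr_eq0 ?g0 // -opprB -hg g0 oppr0.
apply: poly_zero_of => x hx0 hx1.
have e1 : x ^+ n.+1 * (fp - P).[x^-1] = (fp - P).[x].
  by rewrite !hornerD !hornerN mulrDr mulrN sp // symP.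
have e2 : x ^+ n.+2 * (fp - P).[x^-1] = (fp - P).[x].
  by rewrite hg !hornerD !hornerN mulrDr mulrN sm // symM.
have : (x - 1) * (fp - P).[x] = 0.
  by rewrite mulrBl mul1r -{1}e1 mulrA -exprS e2 subrr.
by move/eqP; rewrite mulf_eq0 subr_eq0 (negbTE hx1) /= => /eqP.
Qed.
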